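(* Let $\mathcal{A}$ be a class of continuous nondecreasing functions $\mathbb{R}\to\mathbb{R}$ such that for every compact $K\subset\mathbb{R}$, every continuous nondecreasing $h:K\to\mathbb{R}$ and every $\eta>0$ there is $\alpha\in\mathcal{A}$ with $\sup_{x\in K}|h(x)-\alpha(x)|<\eta$. Let $F:[0,1]^d\to\mathbb{R}$ be of the form $F(\boldsymbol{x})=\sum_{i=1}^N\psi_i(\boldsymbol{a}_i^\top\boldsymbol{x}+b_i)$ with $\boldsymbol{a}_i\in\mathbb{R}^d$, $b_i\in\mathbb{R}$ and each $\psi_i\in C^1(\mathbb{R})$ convex. Then for every $\epsilon>0$ there exist $M\ge1$, $\boldsymbol{W}\in\mathbb{R}^{M\times d}$, $\boldsymbol{c}\in\mathbb{R}^M$, $\boldsymbol{b}\in\mathbb{R}^d$ and $\sigma_1,\dots,\sigma_M\in\mathcal{A}$ such that, with $\sigma(\boldsymbol{z})=(\sigma_1(z_1),\dots,\sigma_M(z_M))$, $$\sup_{\boldsymbol{x}\in[0,1]^d}\|\nabla F(\boldsymbol{x})-(\boldsymbol{W}^\top\sigma(\boldsymbol{W}\boldsymbol{x}+\boldsymbol{c})+\boldsymbol{b})\|<\epsilon,$$ and each such approximator is the gradient of a convex function on $\mathbb{R}^d$.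
   Context: $C^1(\mathbb{R})$ denotes continuously differentiable real functions on $\mathbb{R}$. $\|\cdot\|$ is the Euclidean norm. *)

(* Defs.v *)
From HB Require Import structures.
From mathcomp Require Import all_boot all_order all_algebra.
From mathcomp Require Import all_classical all_reals all_analysis.
Set Implicit Arguments. Unset Strict Implicit. Unset Printing Implicit Defensive.
Import Order.TTheory GRing.Theory Num.Theory.
Import numFieldNormedType.Exports.
Local Open Scope classical_set_scope.
Local Open Scope ring_scope.

Definition convex_fun (R : realType) (V : lmodType R) (f : V -> R) : Prop :=
  forall (x y : V) (t : R), 0 <= t -> t <= 1 ->
    f (t *: x + (1 - t) *: y) <= t * f x + (1 - t) * f y.

Definition C1 (R : realType) (f : R -> R) : Prop :=
  (forall x : R, derivable f x 1) /\ continuous (derive1 f).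

Definition enorm (R : realType) (d : nat) (v : 'cV[R]_d) : R :=
  Num.sqrt (\sum_(k < d) (v k ord0) ^+ 2).

Definition grad (R : realType) (d : nat) (f : 'cV[R]_d -> R) (x : 'cV[R]_d)
  : 'cV[R]_d :=
  \col_(i < d) ('D_(delta_mx i ord0) f x).

Definition unit_cube (R : realType) (d : nat) : set 'cV[R]_d :=
  [set x | forall k : 'I_d, 0 <= x k ord0 <= 1].

Definition dotv (R : realType) (d : nat) (a x : 'cV[R]_d) : R :=
  \sum_(k < d) a k ord0 * x k ord0.

Definition act (R : realType) (M : nat) (s : 'I_M -> R -> R) (z : 'cV[R]_M)
  : 'cV[R]_M := \col_(j < M) s j (z j ord0).

Definition net (R : realType) (d M : nat) (W : 'M[R]_(M, d)) (c : 'cV[R]_M)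
  (b : 'cV[R]_d) (s : 'I_M -> R -> R) (x : 'cV[R]_d) : 'cV[R]_d :=
  W^T *m act s (W *m x + c) + b.

(* Main.v *)
Require Import Defs.
From HB Require Import structures.
From mathcomp Require Import all_boot all_order all_algebra.
From mathcomp Require Import all_classical all_reals all_analysis.
Import Order.TTheory GRing.Theory Num.Theory.
Import numFieldNormedType.Exports.
Local Open Scope classical_set_scope.
Local Open Scope ring_scope.

From mathcomp Require Import lra ring.

Module Helpers.
Set Implicit Arguments. Unset Strict Implicit. Unset Printing Implicit Defensive.
Section SL.
Variable R : realType.
Notation mu := (@lebesgue_measure R).

Lemma supp0 (g : R -> R) : convex_fun g -> derivable g 0 1 -> derive1 g 0 <= g 1 - g 0.
Proof.
move=> cg dg.
set q := (fun h : R => h^-1 *: ((g \o shift 0) (h *: 1) - g 0)).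
have L : q @ 0^' --> derive1 g 0 by rewrite derive1E; exact: dg.
have L2 : q @ 0^'+ --> derive1 g 0.
  move=> A /L /nbhs_ballP [_ /posnumP[e] xe_A].
  by exists e%:num => //= y xe_y; rewrite lt_def => /andP [xney _]; apply: xe_A.
apply: (cvgr_to_le L2).
near=> h.
have h0 : 0 < h by near: h; exact: nbhs_right_gt.
have h1 : h <= 1 by near: h; apply: nbhs_right_le; exact: ltr01.
have := cg 1 0 h (ltW h0) h1.
rewrite scaler0 addr0 /q /= [h *: 1]mulr1 addr0 => H.
have H2 : g h - g 0 <= h * (g 1 - g 0) by rewrite mulrBr mulrBl mul1r in H *; lra.
by rewrite [_ *: _]mulrC ler_pdivrMr // mulrC.
Unshelve. all: by end_near. Qed.


Lemma D_affine (V : normedModType R) (k : V -> R) x v c :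
  (forall h : R, k (h *: v + x) = h * c + k x) -> 'D_v k x = c.
Proof.
move=> hk; rewrite /derive; apply: lim_near_cst; first exact: Rhausdorff.
near=> h.
have h0 : h != 0 by near: h; exact: nbhs_dnbhs_neq.
by rewrite /= hk addrK [_ *: _]mulrA mulVf // mul1r.
Unshelve. all: by end_near. Qed.

Lemma D_chain (V : normedModType R) (f : R -> R) (k : V -> R) x v :
  differentiable k x -> derivable f (k x) 1 ->
  differentiable (f \o k) x /\ 'D_v (f \o k) x = derive1 f (k x) * 'D_v k x.
Proof.
move=> dk /derivable1_diffP df.
have dfk : differentiable (f \o k) x by exact: differentiable_comp.
split => //.
rewrite deriveE // diff_comp //= diff1E // (deriveE _ dk) mulrC //.
Qed.

Lemma affine_diff d (u : 'cV[R]_d) e (x : 'cV[R]_d) :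
  differentiable (fun y => dotv u y + e) x.
Proof.
have -> : (fun y => dotv u y + e) = (\sum_(k < d) (fun y : 'cV[R]_d => u k ord0 * y k ord0)) + cst e.
  by apply/funext => y; rewrite fct_sumE /= /dotv.
apply: differentiableD; last exact: differentiable_cst.
apply: differentiable_sum => k.
apply: (@differentiableM _ _ (cst (u k ord0)) (fun y : 'cV[R]_d => y k ord0)).
  exact: differentiable_cst.
exact: differentiable_coord.
Qed.

Lemma affine_D d (u : 'cV[R]_d) e (x v : 'cV[R]_d) :
  'D_v (fun y => dotv u y + e) x = dotv u v.
Proof.
apply: D_affine => h; rewrite /dotv addrA; congr (_ + _).
rewrite mulr_sumr -big_split /=.
by apply: eq_bigr => k _; rewrite !mxE; ring.
Qed.




Definition PI (s : R -> R) (a y : R) : R := (\int[mu]_(t in [set` `[a, y]]) s t)%R.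

Lemma PI_integrable (s : R -> R) a y : continuous s -> mu.-integrable [set` `[a, y]] (EFin \o s).
Proof.
move=> cs; apply: continuous_compact_integrable; first exact: segment_compact.
exact: continuous_subspaceT.
Qed.

Lemma PI_add (s : R -> R) a a1 y : continuous s -> a <= a1 -> a1 <= y ->
  PI s a y = PI s a a1 + PI s a1 y.
Proof.
move=> cs aa1 a1y.
have := @Rintegral_itvB R s (BLeft a) (BRight y) a1 (PI_integrable a y cs).
rewrite !bnd_simp => /(_ aa1 a1y) H.
have E : \int[mu]_(x in [set` `]a1, y]]) s x = \int[mu]_(x in [set` `[a1, y]]) s x.
  apply: Rintegral_itv_obnd_cbnd; apply: integrableS (PI_integrable a y cs) => //.
  by apply: subset_itvr; rewrite bnd_simp.
rewrite /PI -E -H; ring.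
Qed.


Lemma primitive (s : R -> R) : continuous s ->
  exists Phi : R -> R, forall x, derivable Phi x 1 /\ derive1 Phi x = s x.
Proof.
move=> cs.
exists (fun y => PI s (- (`|y| + 1)) y - PI s (- (`|y| + 1)) 0) => x.
set a := - (`|x| + 2).
set Fa := PI s a - cst (PI s a 0).
have near1 : \forall y \near x, Fa y = PI s (- (`|y| + 1)) y - PI s (- (`|y| + 1)) 0.
  near=> y.
  have xy : `|x - y| < 1.
    by near: y; apply/nbhs_ballP; exists 1; first exact: ltr01.
  have hy : `|y| <= `|x| + `|x - y|.
    by rewrite {1}(_ : y = x - (x - y)); [exact: ler_normB|ring].
  have ny := normr_ge0 y; have ly := ler_norm y; have lny := lerNnormlW (lexx `|y|).
  have h1 : a <= - (`|y| + 1) by rewrite /a; lra.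
  have h2 : - (`|y| + 1) <= y by lra.
  have h3 : - (`|y| + 1) <= 0 by lra.
  rewrite (_ : Fa y = PI s a y - PI s a 0) //.
  rewrite (@PI_add s a (- (`|y| + 1)) y cs) //.
  rewrite (@PI_add s a (- (`|y| + 1)) 0 cs) //; ring.
have xu : x < x + 1 by rewrite ltrDl.
have ax : a < x by rewrite /a; have := lerNnormlW (lexx `|x|); lra.
have [dF DF] := @continuous_FTC1_closed R s a x (x + 1) xu
   (PI_integrable a (x + 1) cs) ax (cs x).
have dF' : derivable (PI s a) x 1 := dF.
have dFa : derivable Fa x 1 := derivableB dF' (derivable_cst _ _ _).
split.
  exact: near_eq_derivable near1 dFa.
have DF' : 'D_1 (PI s a) x = s x by rewrite -derive1E; exact: DF.
have DFa : 'D_1 Fa x = 'D_1 (PI s a) x - 'D_1 (cst (PI s a 0)) x :=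
  deriveB dF' (derivable_cst (PI s a 0) x 1).
rewrite derive_cst subr0 DF' in DFa.
by rewrite derive1E -(near_eq_derive _ near1).
Unshelve. all: by end_near. Qed.


End SL.
Section SM.
Variable R : realType.

Lemma aff_diff (p q : R) (u : R) : differentiable (fun w : R => w * p + q) u.
Proof.
apply: differentiableD; last exact: differentiable_cst.
apply: differentiableM; last exact: differentiable_cst.
by [].
Qed.

Lemma supp_line (f : R -> R) x y : convex_fun f -> (forall t, derivable f t 1) ->
  derive1 f x * (y - x) <= f y - f x.
Proof.
move=> cf df.
pose k := fun u : R => u * (y - x) + x.
have cg : convex_fun (f \o k).
  move=> p q t t0 t1; rewrite /k /=.
  have -> : (t *: p + (1 - t) *: q) * (y - x) + x =
     t *: (p * (y - x) + x) + (1 - t) *: (q * (y - x) + x).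
    rewrite /GRing.scale /=; ring.
  exact: cf.
have [dg Dg] := @D_chain R R f k 0 1 (aff_diff _ _ _) (df (k 0)).
have Dk : 'D_1 k 0 = y - x by apply: D_affine => h; rewrite /k /GRing.scale /=; ring.
have := supp0 cg (@diff_derivable R R R _ 0 1 dg).
rewrite derive1E Dg Dk /k /= mul0r add0r mul1r subrK; exact.
Qed.

Lemma deriv_mono (f : R -> R) : convex_fun f -> (forall t, derivable f t 1) ->
  {homo derive1 f : x y / x <= y}.
Proof.
move=> cf df x y xy.
have h1 := supp_line x y cf df; have h2 := supp_line y x cf df.
rewrite le_eqVlt in xy; case/orP: xy => [/eqP -> //|xy].
nra.
Qed.

Lemma cvx_prim (Phi s : R -> R) : (forall t, derivable Phi t 1 /\ derive1 Phi t = s t) ->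
  {homo s : x y / x <= y} -> convex_fun Phi.
Proof.
move=> dP ms.
have cP : continuous Phi.
  move=> t; apply: differentiable_continuous; apply/derivable1_diffP; exact: (dP t).1.
have isd : forall t : R, is_derive t (1 : R) Phi (s t).
  move=> t; apply: DeriveDef; first exact: (dP t).1.
  by rewrite -derive1E (dP t).2.
have supp z y : Phi z + s z * (y - z) <= Phi y.
  case: (leP z y) => zy.
    have [c cin E] := @MVT_segment R Phi s z y zy (fun t _ => isd t)
        (continuous_subspaceT cP).
    move: cin; rewrite in_itv /= => /andP[zc cy].
    have := ms z c zc; nra.
  have [c cin E] := @MVT_segment R Phi s y z (ltW zy) (fun t _ => isd t)
        (continuous_subspaceT cP).
  move: cin; rewrite in_itv /= => /andP[yc cz].
  have := ms c z cz; nra.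
move=> x y t t0 t1.
set z := t *: x + (1 - t) *: y.
have A := supp z x; have B := supp z y.
have : t * (Phi z + s z * (x - z)) + (1 - t) * (Phi z + s z * (y - z)) <=
       t * Phi x + (1 - t) * Phi y.
  by apply: lerD; apply: ler_wpM2l => //; rewrite subr_ge0.
have -> : t * (Phi z + s z * (x - z)) + (1 - t) * (Phi z + s z * (y - z)) =
    Phi z + s z * ((t *: x + (1 - t) *: y) - z) by rewrite /GRing.scale /=; ring.
by rewrite subrr mulr0 addr0.
Qed.

Lemma ridge_D d n (g : 'I_n -> R -> R) (u : 'I_n -> 'cV[R]_d) (e : 'I_n -> R) x v :
  (forall i t, derivable (g i) t 1) ->
  differentiable (fun y => \sum_(i < n) g i (dotv (u i) y + e i)) x /\
  'D_v (fun y => \sum_(i < n) g i (dotv (u i) y + e i)) x =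
    \sum_(i < n) derive1 (g i) (dotv (u i) x + e i) * dotv (u i) v.
Proof.
move=> dg.
have eH : (fun y => \sum_(i < n) g i (dotv (u i) y + e i)) =
   \sum_(i < n) (g i \o (fun y => dotv (u i) y + e i)).
  by apply/funext => y; rewrite fct_sumE.
have Di i := @D_chain R _ (g i) _ x v (affine_diff (u i) (e i) x) (dg i _).
rewrite eH; split.
  by apply: differentiable_sum => i; exact: (Di i).1.
rewrite derive_sum; last by move=> i; exact: diff_derivable (Di i).1.
by apply: eq_bigr => i _; rewrite (Di i).2 affine_D.
Qed.

Lemma dotv_delta d (u : 'cV[R]_d) k : dotv u (delta_mx k ord0) = u k ord0.
Proof.
rewrite /dotv (bigD1 k) //= !mxE !eqxx mulr1 big1 ?addr0 // => l lk.
by rewrite !mxE (negbTE lk) mulr0.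
Qed.

Lemma grad_ridge d n (g : 'I_n -> R -> R) (u : 'I_n -> 'cV[R]_d) (e : 'I_n -> R) x :
  (forall i t, derivable (g i) t 1) ->
  grad (fun y => \sum_(i < n) g i (dotv (u i) y + e i)) x =
    \col_k \sum_(i < n) derive1 (g i) (dotv (u i) x + e i) * u i k ord0.
Proof.
move=> dg; apply/matrixP => k o; rewrite !mxE (ridge_D u e x _ dg).2.
by apply: eq_bigr => i _; rewrite dotv_delta.
Qed.

Lemma ridge_convex d n (g : 'I_n -> R -> R) (u : 'I_n -> 'cV[R]_d) (e : 'I_n -> R) :
  (forall i, convex_fun (g i)) ->
  convex_fun (fun y => \sum_(i < n) g i (dotv (u i) y + e i)).
Proof.
move=> cg x y t t0 t1 /=.
rewrite !mulr_sumr -big_split /=; apply: ler_sum => i _.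
have -> : dotv (u i) (t *: x + (1 - t) *: y) + e i =
   t *: (dotv (u i) x + e i) + (1 - t) *: (dotv (u i) y + e i).
  have L : forall p q : R, dotv (u i) (p *: x + q *: y) = p * dotv (u i) x + q * dotv (u i) y.
    move=> p q; rewrite /dotv !mulr_sumr -big_split; apply: eq_bigr => k _.
    by rewrite !mxE /=; ring.
  by rewrite L /GRing.scale /=; ring.
exact: cg.
Qed.

Lemma enorm_le d (v : 'cV[R]_d) : enorm v <= \sum_(k < d) `|v k ord0|.
Proof.
have gen : forall n (f : 'I_n -> R), (forall k, 0 <= f k) ->
    \sum_(k < n) f k ^+ 2 <= (\sum_(k < n) f k) ^+ 2.
  elim => [|n IH] f f0; first by rewrite !big_ord0 expr0n /=.
  rewrite !big_ord_recr /=.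
  have := IH (fun k => f (widen_ord (leqnSn n) k)) (fun k => f0 _).
  have := f0 ord_max.
  have : 0 <= \sum_(i < n) f (widen_ord (leqnSn n) i) by apply: sumr_ge0 => *.
  nra.
rewrite /enorm -(@ger0_norm _ (\sum_(k < d) `|v k ord0|)); last by apply: sumr_ge0.
rewrite -sqrtr_sqr ler_sqrt; last by rewrite sqr_ge0.
have := gen d (fun k => `|v k ord0|) (fun k => normr_ge0 _).
have E : \sum_(k < d) `|v k ord0| ^+ 2 = \sum_(k < d) v k ord0 ^+ 2.
  by apply: eq_bigr => k _; rewrite real_normK // num_real.
by rewrite -E.
Qed.

End SM.
End Helpers.
Import Helpers.

Theorem corollary2 (R : realType) (A : set (R -> R))
  (hA_cont : forall alpha, A alpha -> continuous alpha)
  (hA_mono : forall alpha, A alpha -> {homo alpha : x y / x <= y})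
  (hA_dense : forall (K : set R) (h : R -> R) (eta : R),
      compact K ->
      {within K, continuous h} ->
      (forall x y, K x -> K y -> x <= y -> h x <= h y) ->
      0 < eta ->
      exists2 alpha, A alpha &
        exists2 delta : R, delta < eta &
          forall x, K x -> `|h x - alpha x| <= delta)
  (d N : nat) (a : 'I_N -> 'cV[R]_d) (b0 : 'I_N -> R) (psi : 'I_N -> R -> R)
  (hpsi_C1 : forall i, C1 (psi i))
  (hpsi_cvx : forall i, convex_fun (psi i))
  (eps : R) (heps : 0 < eps) :
  let F := fun x : 'cV[R]_d => \sum_(i < N) psi i (dotv (a i) x + b0 i) in
  exists (M : nat) (W : 'M[R]_(M, d)) (c : 'cV[R]_M) (b : 'cV[R]_d)
         (s : 'I_M -> R -> R),
    [/\ (0 < M)%N,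
        (forall j, A (s j)),
        (exists2 delta : R, delta < eps &
           forall x, unit_cube x -> enorm (grad F x - net W c b s x) <= delta) &
        exists G : 'cV[R]_d -> R,
          [/\ convex_fun G,
              (forall x, differentiable G x) &
              (forall x, grad G x = net W c b s x)]].
Proof.
move=> F.
have dpsi : forall i t, derivable (psi i) t 1 := fun i => (hpsi_C1 i).1.
have mono i := deriv_mono (hpsi_cvx i) (dpsi i).
have [al0 Aal0] : exists al0, A al0.
  have [al Aal _] := hA_dense [set` `[0:R, 1]] (fun _ => 0) 1 (@segment_compact R 0 1)
     ltac:(by apply: continuous_subspaceT; exact: cst_continuous) (fun _ _ _ _ _ => lexx 0) ltr01.
  by exists al.
set S := \sum_(k < d) \sum_(i < N) `|a i k ord0|.
have S0 : 0 <= S by apply: sumr_ge0 => k _; apply: sumr_ge0.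
have S1 : 0 < S + 1 by lra.
set eta := eps / (2 * (S + 1)).
have eta0 : 0 < eta by rewrite /eta divr_gt0 // mulr_gt0.
have hS : S * eta < eps.
  rewrite /eta mulrA ltr_pdivrMr; last by rewrite mulr_gt0.
  nra.
set r := fun i => \sum_(k < d) `|a i k ord0| + `|b0 i|.
have appr : forall i, exists al : R -> R, A al /\
    forall t, - r i <= t <= r i -> `|derive1 (psi i) t - al t| <= eta.
  move=> i.
  have [al Aal [del dl H]] := hA_dense [set` `[- r i, r i]] (derive1 (psi i)) eta
     (@segment_compact R (- r i) (r i)) ltac:(by apply: continuous_subspaceT; exact: (hpsi_C1 i).2)
     (fun x y _ _ xy => mono i x y xy) eta0.
  exists al; split => // t tK; apply: le_trans (ltW dl); apply: H.
  by rewrite /= in_itv /=.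
have [alpha Hal] := fin_all_exists appr.
pose W : 'M[R]_(N.+1, d) :=
  \matrix_(j, k) (if unlift ord_max j is Some i then a i k ord0 else 0).
pose c : 'cV[R]_N.+1 := \col_j (if unlift ord_max j is Some i then b0 i else 0).
pose sf : 'I_N.+1 -> R -> R :=
  fun j => if unlift ord_max j is Some i then alpha i else al0.
have Asf : forall j, A (sf j).
  by move=> j; rewrite /sf; case: unlift => [i|] //; exact: (Hal i).1.
have cs : forall j, continuous (sf j) by move=> j; exact: hA_cont.
have ms : forall j, {homo sf j : x y / x <= y} by move=> j; exact: hA_mono.
have [Phi HPhi] := fin_all_exists (fun j => primitive (cs j)).
pose wr := fun j : 'I_N.+1 => \col_(l < d) W j l.
have netE : forall x, net W c 0 sf x =
    \col_k \sum_(j < N.+1) sf j (dotv (wr j) x + c j ord0) * W j k.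
  move=> x; apply/matrixP => k o; rewrite !mxE addr0.
  apply: eq_bigr => j _; rewrite !mxE mulrC; congr (_ * _); congr (sf j _).
  rewrite /dotv; congr (_ + _); apply: eq_bigr => l _; rewrite !mxE //.
have liftW : forall i : 'I_N, widen_ord (leqnSn N) i = lift ord_max i.
  by move=> i; apply: val_inj => /=; rewrite /bump leqNgt ltn_ord add0n.
have netE2 : forall x, net W c 0 sf x =
    \col_k \sum_(i < N) alpha i (dotv (a i) x + b0 i) * a i k ord0.
  move=> x; rewrite netE; apply/matrixP => k o; rewrite !mxE big_ord_recr /=.
  rewrite [W ord_max k]mxE unlift_none mulr0 addr0; apply: eq_bigr => i _.
  rewrite liftW /sf !mxE liftK; congr (_ * _); congr (alpha i _).
  rewrite /dotv; congr (_ + _); apply: eq_bigr => l _; rewrite !mxE liftK //.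
exists N.+1, W, c, 0, sf; split => //.
- exists (S * eta) => // x xc.
  rewrite /F (grad_ridge a b0 x dpsi) netE2.
  apply: le_trans (enorm_le _) _.
  rewrite /S mulr_suml; apply: ler_sum => k _; rewrite mulr_suml.
  rewrite !mxE -sumrB; apply: le_trans (ler_norm_sum _ _ _) _.
  apply: ler_sum => i _; rewrite -mulrBl normrM mulrC ler_wpM2l //.
  apply: (Hal i).2; rewrite -ler_norml.
  apply: le_trans (ler_normD _ _) _; rewrite /r lerD2r.
  apply: le_trans (ler_norm_sum _ _ _) _; apply: ler_sum => l _.
  rewrite normrM; apply: ler_piMr => //.
  have /andP[x0 x1] := xc l; rewrite ger0_norm //.
- exists (fun x => \sum_(j < N.+1) Phi j (dotv (wr j) x + c j ord0)); split.
  + by apply: ridge_convex => j; exact: cvx_prim (HPhi j) (ms j).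
  + move=> x.
    exact: (ridge_D wr (fun j => c j ord0) x 0 (fun j t => (HPhi j t).1)).1.
  + move=> x; rewrite (grad_ridge wr (fun j => c j ord0) x (fun j t => (HPhi j t).1)).
    rewrite netE; apply/matrixP => k o; rewrite !mxE; apply: eq_bigr => j _.
    by rewrite (HPhi j _).2 /wr mxE.
Qed.
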